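(* Let $(V,E)$ be a finite connected $n$-valent graph without loops with a fixed connection $\nabla$, and let $S$ be its face poset. There are bijections between the following three sets: (i) functions $\lambda\colon\mathcal F\to\mathbb Z^n$ on the set $\mathcal F$ of facets such that for every vertex $v$ the values $\{\lambda(F)\mid F\in\mathcal F,\ v\in F\}$ form a basis of $\mathbb Z^n$; (ii) characteristic functions on $S^{op}$; (iii) $T$-graph structures $(V,E,\nabla,\beta)$ on $(V,E)$ with the connection $\nabla$ (hence with face poset $S$).
   Context: A connection is a family of bijections $\nabla_e$ from the edges with initial vertex $i(e)$ to those with initial vertex $t(e)$ with $\nabla_e e=\overline e$ and $\nabla_{\overline e}=\nabla_e^{-1}$. A face of valence $i$ is a connected $i$-valent subgraph invariant under the connection along its edges; $S$ is the set of faces ordered by inclusion; facets are faces of valence $n-1$. A characteristic function on $S^{op}$ is a function $\lambda$ on facets such that for every face $F$ the values of $\lambda$ on the facets containing $F$ form a basis of a direct summand of $\mathbb Z^n$ of rank $n-\rk F$ ($\rk F$ the valence of $F$). A $T$-graph is $(V,E,\nabla,\beta)$ with $\beta\colon E\to\mathbb Z^n$ such that (i) $\beta(\overline e)=-\delta(e)\beta(e)$ with $\delta(e)\in\{\pm1\}$; (ii) for each vertex $v$, $\{\beta(e)\mid i(e)=v\}$ is a basis of $\mathbb Z^n$; (iii) for edges $e,e'$ with common origin, $\beta(\nabla_e e')=\beta(e')+d_{e,e'}\beta(e)$ for some $d_{e,e'}\in\mathbb Z$. *)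

(* Defs.v *)
From HB Require Import structures.
From mathcomp Require Import all_boot all_order all_algebra.
Set Implicit Arguments. Unset Strict Implicit. Unset Printing Implicit Defensive.
Import Order.TTheory GRing.Theory Num.Theory.
Local Open Scope ring_scope.

(* A finite graph with oriented edges: every (geometric) edge appears with
   both orientations; [erev e] is the reversed edge  \overline e,
   [src e] = i(e), [tgt e] = t(e). *)
Record graph := Graph {
  gV : finType;
  gE : finType;
  src : gE -> gV;
  tgt : gE -> gV;
  erev : gE -> gE;
  erevK : involutive erev;
  src_erev : forall e, src (erev e) = tgt e }.

Section Graphs.
Variable G : graph.
Local Notation V := (gV G).
Local Notation E := (gE G).
Local Notation src := (@src G).
Local Notation tgt := (@tgt G).
Local Notation erev := (@erev G).

Definition loopless : Prop := forall e : E, src e != tgt e.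

Definition regular (n : nat) : Prop :=
  forall v : V, #|[set e : E | src e == v]| = n.

Definition adj : rel V := [rel x y | [exists e : E, (src e == x) && (tgt e == y)]].

Definition gconnected : Prop := forall u w : V, connect adj u w.

(* A connection: nab e is a bijection from the edges starting at i(e) to the
   edges starting at t(e), with nab_e e = \overline e and
   nab_{\overline e} = nab_e^{-1}.  (Values of nab e e' for i(e') <> i(e) are
   irrelevant.)  Applying the inverse law to e and to \overline e gives a
   two-sided inverse, hence bijectivity. *)
Definition is_connection (nab : E -> E -> E) : Prop :=
  [/\ forall e e', src e' = src e -> src (nab e e') = tgt e,
      forall e, nab e e = erev e &
      forall e e', src e' = src e -> nab (erev e) (nab e e') = e'].

Variable n : nat.
Variable nab : E -> E -> E.

Definition subadj (F : {set V} * {set E}) : rel V :=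
  [rel x y | [exists e in F.2, (src e == x) && (tgt e == y)]].

Definition is_face (k : nat) (F : {set V} * {set E}) : bool :=
  [&& F.1 != set0,
      [forall e in F.2, (src e \in F.1) && (erev e \in F.2)],
      [forall v in F.1, #|[set e in F.2 | src e == v]| == k],
      [forall u in F.1, forall w in F.1, connect (subadj F) u w] &
      [forall e in F.2, forall e' in F.2, (src e' == src e) ==> (nab e e' \in F.2)]].

Definition face_le (F F' : {set V} * {set E}) : bool :=
  (F.1 \subset F'.1) && (F.2 \subset F'.2).

(* facets: faces of valence n-1 (there are none when n = 0) *)
Definition is_facet (F : {set V} * {set E}) : bool := (0 < n)%N && is_face n.-1 F.

Definition facet := {F : {set V} * {set E} | is_facet F}.

Definition zindep (I : finType) (A : {pred I}) (f : I -> 'rV[int]_n) : Prop :=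
  forall c : I -> int, \sum_(i in A) c i *: f i = 0 -> forall i, i \in A -> c i = 0.

Definition zspan (I : finType) (A : {pred I}) (f : I -> 'rV[int]_n)
  (x : 'rV[int]_n) : Prop :=
  exists c : I -> int, x = \sum_(i in A) c i *: f i.

Definition zbasis (I : finType) (A : {pred I}) (f : I -> 'rV[int]_n) : Prop :=
  zindep A f /\ forall x, zspan A f x.

Definition zsubmodule (M : 'rV[int]_n -> Prop) : Prop :=
  [/\ M 0, forall x y, M x -> M y -> M (x + y) & forall x, M x -> M (- x)].

Definition direct_summand (L : 'rV[int]_n -> Prop) : Prop :=
  exists M, [/\ zsubmodule M,
                forall x, exists l m, [/\ L l, M m & x = l + m] &
                forall x, L x -> M x -> x = 0].

Definition basis_of_summand (I : finType) (A : {pred I}) (f : I -> 'rV[int]_n)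
  (r : nat) : Prop :=
  [/\ zindep A f, #|A| = r & direct_summand (zspan A f)].

Definition facets_at (v : V) : {pred facet} := [pred F : facet | v \in (val F).1].

Definition facets_above (F : {set V} * {set E}) : {pred facet} :=
  [pred F' : facet | face_le F (val F')].

Definition vertex_basis_fun (lam : facet -> 'rV[int]_n) : Prop :=
  forall v : V, zbasis (facets_at v) lam.

Definition characteristic_fun (lam : facet -> 'rV[int]_n) : Prop :=
  forall (k : nat) (F : {set V} * {set E}), is_face k F ->
    basis_of_summand (facets_above F) lam (n - k).

Definition tgraph_structure (beta : E -> 'rV[int]_n) : Prop :=
  [/\ forall e, exists2 delta : int, (delta == 1) || (delta == -1) &
                beta (erev e) = - (delta *: beta e),
      forall v : V, zbasis [pred e : E | src e == v] beta &
      forall e e', src e' = src e ->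
        exists d : int, beta (nab e e') = beta e' + d *: beta e].

End Graphs.

(* Main.v *)
Require Import Defs.
From HB Require Import structures.
From mathcomp Require Import all_boot all_order all_algebra.
From mathcomp Require Import zify.
From Stdlib Require Import Lia ClassicalEpsilon ProofIrrelevance FunctionalExtensionality PropExtensionality.
Set Implicit Arguments. Unset Strict Implicit. Unset Printing Implicit Defensive.
Import Order.TTheory GRing.Theory Num.Theory.
Local Open Scope ring_scope.

Section LinAlg.
Variable n : nat.
Local Notation rV := ('rV[int]_n).

Definition dot (x y : rV) : int := \sum_k x 0 k * y 0 k.

Lemma dotC x y : dot x y = dot y x.
Proof. by apply: eq_bigr => k _; rewrite mulrC. Qed.

Lemma dot0r x : dot x 0 = 0.
Proof. by apply: big1 => k _; rewrite mxE mulr0. Qed.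

Lemma dotBr x y z : dot x (y - z) = dot x y - dot x z.
Proof.
rewrite /dot -sumrB; apply: eq_bigr => k _.
by rewrite !mxE mulrBr.
Qed.

Lemma dotDr x y z : dot x (y + z) = dot x y + dot x z.
Proof. by rewrite /dot -big_split; apply: eq_bigr => k _; rewrite !mxE mulrDr. Qed.

Lemma dotZr x a y : dot x (a *: y) = a * dot x y.
Proof. by rewrite /dot big_distrr; apply: eq_bigr => k _; rewrite !mxE mulrCA. Qed.

Lemma dotNr x y : dot x (- y) = - dot x y.
Proof. by rewrite /dot -sumrN; apply: eq_bigr => k _; rewrite !mxE mulrN. Qed.

Lemma dot_sumr (I : finType) (A : {pred I}) (c : I -> int) (f : I -> rV) x :
  dot x (\sum_(i in A) c i *: f i) = \sum_(i in A) c i * dot x (f i).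
Proof.
rewrite /dot.
under eq_bigr => k _ do rewrite summxE big_distrr /=.
rewrite exchange_big /=; apply: eq_bigr => i _.
rewrite big_distrr /=; apply: eq_bigr => k _.
by rewrite !mxE mulrCA.
Qed.

Lemma dot_suml (I : finType) (A : {pred I}) (c : I -> int) (f : I -> rV) x :
  dot (\sum_(i in A) c i *: f i) x = \sum_(i in A) c i * dot (f i) x.
Proof.
by rewrite dotC dot_sumr; apply: eq_bigr => i _; rewrite dotC.
Qed.

Lemma dot_e k y : dot 'e_k y = y 0 k.
Proof.
rewrite /dot (bigD1 k) //= big1 => [|j /negbTE jk].
  by rewrite !mxE !eqxx mul1r addr0.
by rewrite !mxE eqxx jk mul0r.
Qed.

Lemma sum_delta (I : finType) (A : {pred I}) (f : I -> rV) j :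
  j \in A -> \sum_(i in A) (i == j)%:R *: f i = f j.
Proof.
move=> jA; rewrite (bigD1 j) //= eqxx scale1r big1 ?addr0 // => i /andP[_ /negbTE ->].
by rewrite scale0r.
Qed.

Lemma sum_deltam (I : finType) (A : {pred I}) (f : I -> int) j :
  j \in A -> \sum_(i in A) (i == j)%:R * f i = f j.
Proof.
move=> jA; rewrite (bigD1 j) //= eqxx mul1r big1 ?addr0 // => i /andP[_ /negbTE ->].
by rewrite mul0r.
Qed.

Lemma zbasis_uniq (I : finType) (A : {pred I}) (b : I -> rV) y :
  (forall x, zspan A b x) -> (forall i, i \in A -> dot (b i) y = 0) -> y = 0.
Proof.
move=> Hs H0; apply/rowP => k; rewrite mxE -dot_e.
have [c ->] := Hs 'e_k.
by rewrite dot_suml big1 // => i iA; rewrite H0 // mulr0.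
Qed.

Lemma span_coefs (I : finType) (A : {pred I}) (b : I -> rV) :
  (forall x, zspan A b x) ->
  {a : 'I_n -> I -> int | forall k, 'e_k = \sum_(i in A) a k i *: b i}.
Proof.
move=> Hs.
have H : forall k : 'I_n, {c : I -> int | 'e_k = \sum_(i in A) c i *: b i}.
  by move=> k; apply: constructive_indefinite_description; exact: Hs.
exists (fun k => proj1_sig (H k)) => k; exact: proj2_sig (H k).
Qed.

Lemma basis_coefs (I : finType) (A : {pred I}) (b : I -> rV) (a : 'I_n -> I -> int) :
  zindep A b -> (forall k, 'e_k = \sum_(i in A) a k i *: b i) ->
  forall i j, i \in A -> j \in A -> \sum_k b j 0 k * a k i = (i == j)%:R.
Proof.
move=> Hi Ha.
have key : forall j, j \in A ->
    \sum_(i in A) ((\sum_k b j 0 k * a k i) - (i == j)%:R) *: b i = 0.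
  move=> j jA.
  under eq_bigr => i _ do rewrite scalerBl.
  rewrite sumrB sum_delta //.
  apply/eqP; rewrite subr_eq0; apply/eqP.
  rewrite {2}(row_sum_delta (b j)).
  under [RHS]eq_bigr => k _ do rewrite Ha scaler_sumr.
  rewrite exchange_big /=; apply: eq_bigr => i _.
  rewrite scaler_suml; apply: eq_bigr => k _.
  by rewrite scalerA.
move=> i j iA jA; apply/eqP; rewrite -subr_eq0; apply/eqP.
exact: (Hi _ (key j jA) i iA).
Qed.

Lemma zbasis_exist (I : finType) (A : {pred I}) (b : I -> rV) (t : I -> int) :
  zbasis A b -> exists y, forall i, i \in A -> dot (b i) y = t i.
Proof.
case=> Hi Hs; have [a Ha] := span_coefs Hs.
have Hc := basis_coefs Hi Ha.
exists (\row_k \sum_(i in A) a k i * t i) => j jA.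
rewrite /dot.
under eq_bigr => k _ do rewrite mxE big_distrr /=.
rewrite exchange_big /=.
transitivity (\sum_(i in A) (i == j)%:R * t i); last exact: sum_deltam.
apply: eq_bigr => i iA; rewrite -Hc // big_distrl /=.
by apply: eq_bigr => k _; rewrite mulrA.
Qed.

Lemma zbasis_card_ge (I : finType) (A : {pred I}) (b : I -> rV) :
  (forall x, zspan A b x) -> (n <= #|A|)%N.
Proof.
move=> Hs; have [a Ha] := span_coefs Hs.
pose Am : 'M[int]_(n, #|A|) := \matrix_(k, p) a k (enum_val p).
pose Bm : 'M[int]_(#|A|, n) := \matrix_(p, k) b (enum_val p) 0 k.
have AB : Am *m Bm = 1%:M.
  apply/matrixP => k k'; rewrite !mxE.
  have := congr1 (fun v : rV => v 0 k') (Ha k); rewrite /= !mxE eqxx /= eq_sym => ->.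
  rewrite summxE [RHS]big_enum_val; apply: eq_bigr => p _.
  by rewrite !mxE.
have : \rank (map_mx (intr : int -> rat) (Am *m Bm)) = n.
  by rewrite AB map_mx1 mxrank1.
rewrite map_mxM => <-.
apply: leq_trans (mxrankM_maxl _ _) (rank_leq_col _).
Qed.


Lemma zbasis_dual_h (I J : finType) (A : {pred I}) (B : {pred J})
    (b : I -> rV) (c : J -> rV) (h : J -> I) :
  zbasis A b -> {in B &, injective h} -> (forall j, j \in B -> h j \in A) ->
  (forall i, i \in A -> exists2 j, j \in B & h j = i) ->
  (forall i j, i \in A -> j \in B -> dot (b i) (c j) = (i == h j)%:R) ->
  zbasis B c.
Proof.
move=> [Hi Hs] hinj hAB hsurj Hd.
have key : forall (d : J -> int) j0, j0 \in B ->
    dot (b (h j0)) (\sum_(j in B) d j *: c j) = d j0.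
  move=> d j0 j0B; rewrite dot_sumr (bigD1 j0) //= Hd ?hAB // eqxx mulr1.
  rewrite big1 ?addr0 // => j /andP[jB jj0].
  rewrite Hd ?hAB //; case: eqP => [/hinj E|]; last by rewrite mulr0.
  by rewrite E ?eqxx in jj0.
split.
  move=> d H0 j jB; by rewrite -(key d j jB) H0 dot0r.
move=> x; exists (fun j => dot (b (h j)) x).
apply/eqP; rewrite eq_sym -subr_eq0; apply/eqP.
apply: (zbasis_uniq Hs) => i iA.
have [j0 j0B <-] := hsurj i iA.
by rewrite dotBr key // subrr.
Qed.

Lemma zexpand_g (I J : finType) (A : {pred I}) (B : {pred J})
    (b : I -> rV) (c : J -> rV) (g : I -> J) :
  zbasis A b -> {in A &, injective g} -> (forall i, i \in A -> g i \in B) ->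
  (forall i j, i \in A -> j \in B -> dot (b i) (c j) = (g i == j)%:R) ->
  forall x, x = \sum_(i in A) dot (b i) x *: c (g i).
Proof.
move=> [Hi Hs] ginj gAB Hd x.
apply/eqP; rewrite -subr_eq0; apply/eqP.
apply: (zbasis_uniq Hs) => k kA.
rewrite dotBr dot_sumr (bigD1 k) //= Hd ?gAB // eqxx mulr1.
rewrite big1 ?addr0 ?subrr // => i /andP[iA ik].
rewrite Hd ?gAB //; case: eqP => [/ginj E|]; last by rewrite mulr0.
by rewrite E ?eqxx in ik.
Qed.

Lemma zbasis_dual_g (I J : finType) (A : {pred I}) (B : {pred J})
    (b : I -> rV) (c : J -> rV) (g : I -> J) :
  zbasis A b -> {in A &, injective g} -> (forall i, i \in A -> g i \in B) ->
  (forall j, j \in B -> exists2 i, i \in A & g i = j) ->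
  (forall i j, i \in A -> j \in B -> dot (b i) (c j) = (g i == j)%:R) ->
  zbasis B c.
Proof.
move=> Hb ginj gAB gsurj Hd; have [Hi Hs] := Hb.
split.
  move=> d H0 j jB; have [i iA gi] := gsurj j jB.
  have := congr1 (dot (b i)) H0; rewrite dot0r dot_sumr (bigD1 j) //= Hd ?gi ?eqxx // mulr1.
  rewrite big1 ?addr0 // => j' /andP[j'B jj'].
  by rewrite Hd // gi eq_sym (negbTE jj') mulr0.
move=> x; exists (fun j => \sum_(i in A | g i == j) dot (b i) x).
rewrite {1}(zexpand_g Hb ginj gAB Hd x).
rewrite (partition_big g B) //=; apply: eq_bigr => j jB.
rewrite scaler_suml; apply: eq_bigr => i /andP[_ /eqP ->] //.
Qed.

Lemma zbasis_eq (I : finType) (A A' : {pred I}) (b : I -> rV) :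
  A =i A' -> zbasis A b -> zbasis A' b.
Proof.
move=> E [Hi Hs]; split.
  move=> c H0 i; rewrite -E; apply: Hi; rewrite -[RHS]H0; apply: eq_bigl => j; by rewrite E.

move=> x; have [c ->] := Hs x; exists c; by apply: eq_bigl => j; rewrite E.
Qed.

Lemma zspan_sum (I : finType) (A : {pred I}) (b : I -> rV) (J : finType) (P : {pred J})
   (d : J -> int) (f : J -> rV) :
  (forall j, zspan A b (f j)) -> zspan A b (\sum_(j in P) d j *: f j).
Proof.
move=> H.
have /all_sig[c Hc] : forall j, {c : I -> int | f j = \sum_(i in A) c i *: b i}.
  move=> j; apply: constructive_indefinite_description; exact: H.
exists (fun i => \sum_(j in P) d j * c j i).
under eq_bigr => j _ do rewrite Hc scaler_sumr.
rewrite exchange_big /=; apply: eq_bigr => i _.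
rewrite scaler_suml; apply: eq_bigr => j _; by rewrite scalerA.
Qed.

Lemma zsub_scale (M : rV -> Prop) z x : zsubmodule M -> M x -> M (z *: x).
Proof.
case=> M0 MD MN Mx.
have Hn : forall m : nat, M (x *+ m).
  elim=> [|m IH]; first by rewrite mulr0n.
  by rewrite mulrS; apply: MD.
rewrite -[z]intz scaler_int.
case: z => m; first exact: Hn.
by rewrite NegzE mulrNz; apply: MN; exact: Hn.
Qed.

Lemma zsub_sum (M : rV -> Prop) (J : finType) (P : {pred J}) (d : J -> int) (f : J -> rV) :
  zsubmodule M -> (forall j, M (f j)) -> M (\sum_(j in P) d j *: f j).
Proof.
move=> HM Hf; have [M0 MD MN] := HM.
apply: (big_ind M) => // j _; exact: zsub_scale.
Qed.

Lemma summand_span (I : finType) (A : {pred I}) (b : I -> rV) :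
  basis_of_summand A b n -> zbasis A b.
Proof.
case=> Hi hA [M [HM Hdec Hint]].
have [M0 MD MN] := HM.
have /all_sig[l Hl] : forall k : 'I_n, {l : rV | zspan A b l /\ M ('e_k - l)}.
  move=> k; apply: constructive_indefinite_description.
  have [l [m [Ll Mm E]]] := Hdec 'e_k; exists l; split=> //.
  by rewrite E addrC addKr.
have /all_sig[a Ha] : forall k : 'I_n, {a : I -> int | l k = \sum_(i in A) a i *: b i}.
  move=> k; apply: constructive_indefinite_description; exact: (proj1 (Hl k)).
have Hc : forall i j, i \in A -> j \in A -> \sum_k b j 0 k * a k i = (i == j)%:R.
  move=> i j iA jA.
  have E0 : \sum_k b j 0 k *: ('e_k - l k) = 0.
    under eq_bigr => k _ do rewrite scalerBr.
    apply: Hint.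
      rewrite sumrB -row_sum_delta.
      pose c i := (i == j)%:R - \sum_k b j 0 k * a k i.
      exists c; rewrite /c.
      under [RHS]eq_bigr => i' _ do rewrite scalerBl.
      rewrite sumrB sum_delta //; congr (_ - _).
      under eq_bigr => k _ do rewrite Ha scaler_sumr.
      rewrite exchange_big /=; apply: eq_bigr => i' _.
      rewrite scaler_suml; apply: eq_bigr => k _; by rewrite scalerA.
    under eq_bigr => k _ do rewrite -scalerBr.
    by apply: zsub_sum => // k; exact: (proj2 (Hl k)).
  have key : \sum_(i in A) ((\sum_k b j 0 k * a k i) - (i == j)%:R) *: b i = 0.
    under eq_bigr => i' _ do rewrite scalerBl.
    rewrite sumrB sum_delta //.
    have Ebj : b j = \sum_k b j 0 k *: l k.
      move: E0; under eq_bigr => k _ do rewrite scalerBr.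
      by rewrite sumrB -row_sum_delta => /eqP; rewrite subr_eq0 => /eqP.
    rewrite [X in _ - X]Ebj.
    under [X in _ - X]eq_bigr => k _ do rewrite Ha scaler_sumr.
    rewrite [X in _ - X]exchange_big /= -sumrB big1 // => i' _.
    rewrite scaler_suml -sumrB big1 // => k _; by rewrite scalerA subrr.
  apply/eqP; rewrite -subr_eq0; apply/eqP; exact: (Hi _ key i iA).
pose ev (p : 'I_n) : I := enum_val (cast_ord (esym hA) p).
have evA p : ev p \in A by exact: enum_valP.
have sumA : forall F : I -> int, \sum_(i in A) F i = \sum_(p < n) F (ev p).
  move=> F; rewrite big_enum_val.
  rewrite (reindex (cast_ord (esym hA))) //.
  exists (cast_ord hA) => p _; apply: val_inj => //.
pose Bm : 'M[int]_n := \matrix_(p, k) b (ev p) 0 k.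
pose Am : 'M[int]_n := \matrix_(k, p) a k (ev p).
have BA : Bm *m Am = 1%:M.
  apply/matrixP => p q; rewrite !mxE.
  under eq_bigr => k _ do rewrite !mxE.
  rewrite Hc //; congr ((_ : bool)%:R).
  apply/eqP/eqP => [E|->] //.
  apply: esym; apply: (cast_ord_inj (eq_n := esym hA)); exact: (enum_val_inj E).
have AB := mulmx1C BA.
split=> // x.
rewrite (row_sum_delta x); apply: zspan_sum => k.
exists (a k).
apply/rowP => k'; rewrite summxE.
have := congr1 (fun M : 'M[int]_n => M k k') AB.
rewrite !mxE => E.
rewrite eqxx /= eq_sym -E sumA; apply: eq_bigr => p _.
by rewrite !mxE.
Qed.


Lemma sub_summand (I : finType) (A : {pred I}) (P : pred I) (b : I -> rV) :
  zbasis A b ->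
  zindep [pred i | (i \in A) && P i] b /\ direct_summand (zspan [pred i | (i \in A) && P i] b).
Proof.
case=> Hi Hs.
have split_sum : forall c : I -> int, \sum_(i in A) c i *: b i =
   \sum_(i in [pred i | (i \in A) && P i]) c i *: b i +
   \sum_(i in [pred i | (i \in A) && ~~ P i]) c i *: b i.
  by move=> c; rewrite (bigID P) /=.
split.
  move=> c H0 i; rewrite inE => /andP[iA Pi].
  pose c' j := if P j then c j else 0.
  have := Hi c'; rewrite split_sum.
  rewrite (eq_bigr (fun j => c j *: b j)); last by move=> j; rewrite inE /c' => /andP[_ ->].
  rewrite H0 add0r big1 => [/(_ erefl i iA)|]; first by rewrite /c' Pi.
  by move=> j; rewrite inE /c' => /andP[_ /negbTE ->]; rewrite scale0r.
exists (zspan [pred i | (i \in A) && ~~ P i] b); split.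
- split.
  + by exists (fun=> 0); rewrite big1 // => i _; rewrite scale0r.
  + move=> x y [c ->] [d ->]; exists (fun i => c i + d i).
    by rewrite -big_split /=; apply: eq_bigr => i _; rewrite scalerDl.
  + move=> x [c ->]; exists (fun i => - c i).
    by rewrite -sumrN; apply: eq_bigr => i _; rewrite scaleNr.
- move=> x; have [c ->] := Hs x; rewrite split_sum.
  by do 2 eexists; split; [exists c | exists c | ].
- move=> x [c Ec] [d Ed].
  pose e j := if P j then c j else - d j.
  have H0 : \sum_(i in A) e i *: b i = 0.
    rewrite split_sum.
    rewrite (eq_bigr (fun j => c j *: b j)); last by move=> j; rewrite inE => /andP[_ Pj]; rewrite /e Pj.
    rewrite [X in _ + X](eq_bigr (fun j => - (d j *: b j))); last first.
      by move=> j; rewrite inE => /andP[_ nPj]; rewrite /e (negbTE nPj) scaleNr.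
    by rewrite sumrN -Ec -Ed subrr.
  rewrite Ec big1 // => i; rewrite inE => /andP[iA Pi].
  by have := Hi e H0 i iA; rewrite /e Pi => ->; rewrite scale0r.
Qed.


Lemma zspan_eq (I : finType) (A A' : {pred I}) (b : I -> rV) :
  A =i A' -> zspan A b = zspan A' b.
Proof.
move=> E; apply: functional_extensionality => x.
apply: propositional_extensionality.
by split=> -[c ->]; exists c; apply: eq_bigl => i; rewrite E.
Qed.

Lemma zindep_eq (I : finType) (A A' : {pred I}) (b : I -> rV) :
  A =i A' -> zindep A b -> zindep A' b.
Proof.
move=> E Hi c H0 i; rewrite -E; apply: Hi; rewrite -[RHS]H0; apply: eq_bigl => j; by rewrite E.
Qed.

Lemma bos_eq (I : finType) (A A' : {pred I}) (b : I -> rV) r :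
  A =i A' -> basis_of_summand A b r -> basis_of_summand A' b r.
Proof.
move=> E [Hi Hc Hd]; split.
- exact: zindep_eq Hi.
- by rewrite -Hc; apply: eq_card => i; rewrite E.
- by rewrite -(zspan_eq b E).
Qed.

End LinAlg.

Lemma connect_inv (T : finType) (r : rel T) (P : T -> Prop) x y :
  connect r x y -> P x -> (forall a b, P a -> r a b -> P b) -> P y.
Proof.
move=> /connectP[p Hp ->] Px step.
elim: p x Hp Px => //= a p IH x /andP[rxa Hp] Px.
apply: IH Hp _; exact: step rxa.
Qed.

Section Graph.
Variable G : graph.
Variable n : nat.
Variable nab : gE G -> gE G -> gE G.
Hypothesis Hreg : regular G n.
Hypothesis Hcon : is_connection nab.
Local Notation V := (gV G).
Local Notation E := (gE G).
Local Notation facet := (@facet G n nab).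
Local Notation rV := ('rV[int]_n).

Definition Ev (v : V) : {set E} := [set e : E | src e == v].

Lemma card_Ev v : #|Ev v| = n.
Proof. exact: Hreg. Qed.

Lemma tgt_erev (e : E) : tgt (erev e) = src e.
Proof. by rewrite -src_erev erevK. Qed.

Lemma con_src e e' : src e' = src e -> src (nab e e') = tgt e.
Proof. by case: Hcon => H _ _; apply: H. Qed.

Lemma con_refl e : nab e e = erev e.
Proof. by case: Hcon => _ H _; apply: H. Qed.

Lemma con_inv e e' : src e' = src e -> nab (erev e) (nab e e') = e'.
Proof. by case: Hcon => _ _ H; apply: H. Qed.

Lemma con_inv' e e'' : src e'' = tgt e -> nab e (nab (erev e) e'') = e''.
Proof.
move=> H; have := @con_inv (erev e) e''; rewrite erevK; apply.
by rewrite src_erev.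
Qed.

Section Face.
Variables (k : nat) (F : {set V} * {set E}).
Hypothesis HF : is_face nab k F.

Lemma face_ne : F.1 != set0.
Proof. by case/and5P: HF. Qed.

Lemma face_src e : e \in F.2 -> src e \in F.1.
Proof. case/and5P: HF => _ /forall_inP H _ _ _ /H /andP[] //. Qed.

Lemma face_rev e : e \in F.2 -> erev e \in F.2.
Proof. case/and5P: HF => _ /forall_inP H _ _ _ /H /andP[] //. Qed.

Lemma face_tgt e : e \in F.2 -> tgt e \in F.1.
Proof. by move/face_rev/face_src; rewrite src_erev. Qed.

Lemma face_val v : v \in F.1 -> #|[set e in F.2 | src e == v]| = k.
Proof. case/and5P: HF => _ _ /forall_inP H _ _ /H /eqP //. Qed.

Lemma face_conn u w : u \in F.1 -> w \in F.1 -> connect (subadj F) u w.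
Proof.
case/and5P: HF => _ _ _ /forall_inP H _ uF wF.
by have /forall_inP := H u uF; apply.
Qed.

Lemma face_inv e e' : e \in F.2 -> e' \in F.2 -> src e' = src e -> nab e e' \in F.2.
Proof.
case/and5P: HF => _ _ _ _ /forall_inP H eF e'F se.
have /forall_inP := H e eF; move/(_ e' e'F)/implyP; apply; exact/eqP.
Qed.

Lemma face_prop e e' : e \in F.2 -> src e' = src e -> (nab e e' \in F.2) = (e' \in F.2).
Proof.
move=> eF se; apply/idP/idP => [H|]; last by move=> e'F; exact: face_inv.
rewrite -(con_inv se); apply: face_inv => //; first exact: face_rev.
by rewrite src_erev con_src.
Qed.

End Face.

Lemma face_le_of k k' F F' v :
  is_face nab k F -> is_face nab k' F' -> v \in F.1 -> v \in F'.1 ->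
  (forall e, e \in F.2 -> src e = v -> e \in F'.2) -> face_le F F'.
Proof.
move=> HF HF' vF vF' Hv.
pose Q w := w \in F'.1 /\ forall e, e \in F.2 -> src e = w -> e \in F'.2.
have HQ : forall w, w \in F.1 -> Q w.
  move=> w wF; apply: (connect_inv (P := Q) (face_conn HF vF wF) (conj vF' Hv)) => a b [aF' Ha].
  case/existsP => e /andP[eF /andP[/eqP sa /eqP tb]].
  have eF' : e \in F'.2 by apply: Ha.
  rewrite /Q -tb; split.
  have X := face_tgt HF' eF'. exact X.
  move=> e'' e''F se''.
  have s1 : src e'' = src (erev e) by rewrite src_erev se''.
  have e1F : nab (erev e) e'' \in F.2 by apply: (face_inv HF) => //; exact (face_rev HF eF).
  have e1F' : nab (erev e) e'' \in F'.2 by apply: Ha => //; rewrite con_src // tgt_erev.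
  rewrite -(con_inv' (e := e) (e'' := e'')); last by rewrite se''.
  apply: (face_inv HF') => //; by rewrite con_src // tgt_erev.
apply/andP; split; apply/subsetP => x xF; first by case: (HQ x xF).
by case: (HQ _ (face_src HF xF)) => _; apply.
Qed.


Lemma facet_face (F : facet) : is_face nab n.-1 (val F).
Proof. by case: F => F /= /andP[]. Qed.

Lemma facet_n (F : facet) : (0 < n)%N.
Proof. by case: F => F /= /andP[]. Qed.

Lemma facet_vertex (F : facet) : exists v, v \in (val F).1.
Proof. by apply/set0Pn; exact: face_ne (facet_face F). Qed.

Lemma facet_has_edge (F : facet) : exists e : E, true.
Proof.
have [v _] := facet_vertex F.
have : (0 < #|Ev v|)%N by rewrite card_Ev; exact: facet_n F.
by case/card_gt0P => e _; exists e.
Qed.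

Definition miss_set (v : V) (F : facet) : {set E} := [set e in Ev v | e \notin (val F).2].

Definition miss (v : V) (F : facet) : E :=
  odflt (xchoose (facet_has_edge F)) [pick e in miss_set v F].

Lemma miss_set1 v (F : facet) : v \in (val F).1 -> miss_set v F = [set miss v F].
Proof.
move=> vF.
have HF := facet_face F; have n0 := facet_n F.
have E1 : Ev v :&: (val F).2 = [set e in (val F).2 | src e == v].
  by apply/setP => e; rewrite !inE andbC.
have C : #|miss_set v F| = 1%N.
  have := cardsID (val F).2 (Ev v); rewrite E1 (face_val HF vF) card_Ev.
  have -> : Ev v :\: (val F).2 = miss_set v F by apply/setP => e; rewrite !inE andbC.
  by move=> H; lia.
have /cards1P[e1 Ee1] : #|miss_set v F| == 1%N by rewrite C.
rewrite /miss; case: pickP => [e|]; last by move/(_ e1); rewrite Ee1 inE eqxx.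
by rewrite Ee1 inE => /eqP ->.
Qed.

Lemma miss_Ev v (F : facet) : v \in (val F).1 -> miss v F \in Ev v.
Proof.
move=> vF; have : miss v F \in miss_set v F by rewrite miss_set1 // set11.
by rewrite inE => /andP[].
Qed.

Lemma miss_notin v (F : facet) : v \in (val F).1 -> miss v F \notin (val F).2.
Proof.
move=> vF; have : miss v F \in miss_set v F by rewrite miss_set1 // set11.
by rewrite inE => /andP[].
Qed.

Lemma facet_edges v (F : facet) e : v \in (val F).1 -> src e = v ->
  (e \in (val F).2) = (e != miss v F).
Proof.
move=> vF se.
have := congr1 (fun S : {set E} => e \in S) (miss_set1 vF); rewrite /= !inE se eqxx /=.
by move=> <-; rewrite negbK.
Qed.

Lemma facet_eq v (F F' : facet) : v \in (val F).1 -> v \in (val F').1 ->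
  miss v F = miss v F' -> F = F'.
Proof.
move=> vF vF' Em; apply: val_inj.
have HF := facet_face F; have HF' := facet_face F'.
have /andP[s1 s2] : face_le (val F) (val F').
  by apply: (face_le_of HF HF' vF vF') => e eF se; rewrite (facet_edges vF') // -Em -(facet_edges vF).
have /andP[s3 s4] : face_le (val F') (val F).
  by apply: (face_le_of HF' HF vF' vF) => e eF se; rewrite (facet_edges vF) // Em -(facet_edges vF').
case: (val F) (val F') s1 s2 s3 s4 => [A B] [C D] /= s1 s2 s3 s4.
by congr pair; apply/eqP; rewrite eqEsubset ?s1 ?s2 ?s3 ?s4.
Qed.

Lemma miss_inj v : {in facets_at v &, injective (miss v)}.
Proof. by move=> F F' vF vF'; exact: facet_eq. Qed.


Lemma in_facets_at v (F : facet) : (F \in facets_at v) = (v \in (val F).1).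
Proof. by []. Qed.

Lemma in_facets_above P (F : facet) : (F \in facets_above P) = face_le P (val F).
Proof. by []. Qed.

Section VB.
Variable lam : facet -> rV.

Lemma vb_surj v : zbasis (facets_at v) lam ->
  forall e, e \in Ev v -> exists2 F, F \in facets_at v & miss v F = e.
Proof.
case=> Hi Hs.
have ge := zbasis_card_ge Hs.
have sub : [set miss v F | F in facets_at v] \subset Ev v.
  by apply/subsetP => e /imsetP[F FA ->]; exact: miss_Ev.
have Eq : [set miss v F | F in facets_at v] = Ev v.
  apply/eqP; rewrite eqEcard sub /= card_Ev card_in_imset //; exact: miss_inj.
by move=> e; rewrite -Eq => /imsetP[F FA ->]; exists F.
Qed.

Lemma vb_char : vertex_basis_fun lam -> characteristic_fun lam.
Proof.
move=> Hvb k P HP.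
have /set0Pn[v vP] := face_ne HP.
pose Pv := [set e in P.2 | src e == v].
pose A' := [pred F : facet | (F \in facets_at v) && (miss v F \notin Pv)].
have EA : A' =i facets_above P.
  move=> F; rewrite in_facets_above /A' inE in_facets_at.
  apply/andP/idP => [[vF nm]|].
    apply: (face_le_of HP (facet_face F) vP (vF)) => e eP se.
    rewrite (facet_edges vF se); apply/eqP => Em; move: nm.
    by rewrite -Em inE eP se eqxx.
  case/andP=> s1 s2; have vF : v \in (val F).1 by apply: (subsetP s1).
  split=> //; apply/negP; rewrite inE => /andP[mP _].
  by move: (miss_notin vF); rewrite (subsetP s2 _ mP).
have [Hi Hd] := sub_summand (fun F => miss v F \notin Pv) (Hvb v).
apply: (bos_eq EA); split => //.
have inj : {in A' &, injective (miss v)}.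
  move=> F F'; rewrite !inE => /andP[vF _] /andP[vF' _]; exact: miss_inj.
rewrite -(card_in_imset inj).
have -> : [set miss v F | F in A'] = Ev v :\: Pv.
  apply/setP => e; rewrite !inE; apply/imsetP/andP => [[F /andP[vF nm] ->]|[nP eE]].
    by split; [move: nm; rewrite inE | have := miss_Ev vF; rewrite inE].
  have [|F vF me] := vb_surj (Hvb v) (e := e); first by rewrite inE.
  exists F => //; rewrite /A' inE vF /= me inE; exact: nP.
rewrite cardsD card_Ev.
have -> : Ev v :&: Pv = Pv.
  by apply/setIidPr/subsetP => e; rewrite !inE => /andP[_ ->].
by rewrite (face_val HP vP).
Qed.

Lemma vface_face v : is_face nab 0 ([set v], set0).
Proof.
apply/and5P; split => /=.
- by apply/set0Pn; exists v; rewrite inE.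
- by apply/forall_inP; move=> x; rewrite in_set0.
- apply/forall_inP; move=> w _; rewrite cards_eq0; apply/eqP/setP => e.
  by rewrite !inE.
- apply/forall_inP; move=> u; rewrite inE => /eqP ->.
  apply/forall_inP; move=> w; rewrite inE => /eqP ->.
  exact: connect0.
- by apply/forall_inP; move=> x; rewrite in_set0.
Qed.

Lemma char_vb : characteristic_fun lam -> vertex_basis_fun lam.
Proof.
move=> Hc v; have := Hc 0%N _ (vface_face v); rewrite subn0 => H.
apply: summand_span; apply: bos_eq H => F.
rewrite in_facets_above in_facets_at /face_le /= sub0set andbT.
by rewrite sub1set.
Qed.

End VB.


Lemma int_unit (c c' : int) : c' * c = 1 -> (c == 1) || (c == -1).
Proof.
move=> H; have : absz (c' * c)%R == 1%N by rewrite H.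
rewrite abszM muln_eq1 => /andP[_ /eqP h]; lia.
Qed.

Section Phi.
Variable lam : facet -> rV.
Hypothesis Hvb : vertex_basis_fun lam.

Definition betaP (e : E) (y : rV) :=
  forall F : facet, src e \in (val F).1 -> dot (lam F) y = (e \notin (val F).2)%:R.

Definition betaOf (e : E) : rV := epsilon (inhabits 0) (betaP e).

Lemma betaOf_spec e : betaP e (betaOf e).
Proof.
apply: epsilon_spec.
have [y Hy] := zbasis_exist (fun F : facet => (e \notin (val F).2)%:R) (Hvb (src e)).
by exists y => F vF; apply: Hy.
Qed.

Local Notation beta := betaOf.

Lemma beta_dual v F e : F \in facets_at v -> e \in Ev v ->
  dot (lam F) (beta e) = (miss v F == e)%:R.
Proof.
rewrite in_facets_at inE => vF /eqP se.
rewrite betaOf_spec ?se // (facet_edges vF se) negbK eq_sym.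
by [].
Qed.

Lemma beta_expand v x : x = \sum_(F in facets_at v) dot (lam F) x *: beta (miss v F).
Proof.
apply: (zexpand_g (B := mem (Ev v))) (Hvb v) _ _ _ x.
- exact: miss_inj.
- by move=> F vF; exact: (miss_Ev vF).
- by move=> F e vF eE; exact: beta_dual.
Qed.

Lemma beta_basis v : zbasis [pred e : E | src e == v] beta.
Proof.
apply: (zbasis_eq (A := mem (Ev v))); first by move=> e; rewrite !inE.
apply: (zbasis_dual_g (Hvb v)).
- exact: miss_inj.
- by move=> F vF; exact: (miss_Ev vF).
- by move=> e eE; apply: vb_surj.
- by move=> F e vF eE; exact: beta_dual.
Qed.

Lemma beta_coll e x :
  (forall F : facet, src e \in (val F).1 -> e \in (val F).2 -> dot (lam F) x = 0) ->
  exists c : int, x = c *: beta e.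
Proof.
move=> H; exists (\sum_(F in facets_at (src e)) dot (lam F) x).
rewrite {1}(beta_expand (src e) x) scaler_suml; apply: eq_bigr => F vF.
rewrite in_facets_at in vF.
have [eF|neF] := boolP (e \in (val F).2); first by rewrite H // !scale0r.
congr (_ *: beta _); apply/eqP.
by move: neF; rewrite (facet_edges vF) // negbK eq_sym.
Qed.

Lemma beta_ne0 e : exists2 F : facet, src e \in (val F).1 & dot (lam F) (beta e) = 1.
Proof.
have [|F vF me] := vb_surj (Hvb (src e)) (e := e); first by rewrite inE.
exists F => //; rewrite betaOf_spec // (facet_edges vF) // negbK me eqxx; by [].
Qed.

Lemma beta_rev e : exists c : int, ((c == 1) || (c == -1)) && (beta (erev e) == c *: beta e).
Proof.
have H1 : forall e, exists c : int, beta (erev e) = c *: beta e.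
  move=> e0; apply: beta_coll => F vF eF.
  rewrite betaOf_spec; last by rewrite src_erev; exact (face_tgt (facet_face F) eF).
  by rewrite (face_rev (facet_face F) eF).
have [c Hc] := H1 e; have [c' Hc'] := H1 (erev e); rewrite erevK Hc scalerA in Hc'.
have [F vF H] := beta_ne0 e.
have := congr1 (dot (lam F)) Hc'; rewrite H.
rewrite /dot.
have -> : \sum_k lam F 0 k * ((c' * c) *: beta e) 0 k = (c' * c) * dot (lam F) (beta e).
  rewrite /dot big_distrr; apply: eq_bigr => k _; rewrite mxE mulrCA.
  by [].
rewrite H mulr1 => E1.
exists c; rewrite (int_unit (esym E1)) Hc eqxx.
by [].
Qed.

Lemma beta_nab e e' : src e' = src e -> exists d : int, beta (nab e e') = beta e' + d *: beta e.
Proof.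
move=> se.
have [d Hd] : exists d : int, beta (nab e e') - beta e' = d *: beta e.
  apply: beta_coll => F vF eF.
  have HF := facet_face F.
  rewrite dotBr !betaOf_spec ?se //; last first.
    rewrite con_src //; exact (face_tgt HF eF).
  by rewrite (face_prop HF eF se) subrr.
by exists d; rewrite -Hd addrC subrK.
Qed.

Lemma beta_tgraph : tgraph_structure nab beta.
Proof.
split.
- move=> e; have [c /andP[Hc /eqP Ec]] := beta_rev e.
  exists (- c); first by case/orP: Hc => /eqP ->; rewrite ?opprK eqxx ?orbT.
  by rewrite Ec scaleNr opprK.
- exact: beta_basis.
- exact: beta_nab.
Qed.

End Phi.


Section Psi.
Variable beta : E -> rV.
Hypothesis Htg : tgraph_structure nab beta.

Lemma Hbas v : zbasis [pred e : E | src e == v] beta.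
Proof. by case: Htg. Qed.

Lemma dot_rev mu e : dot mu (beta e) = 0 -> dot mu (beta (erev e)) = 0.
Proof.
case: Htg => H _ _; have [d _ ->] := H e.
by rewrite dotNr dotZr => ->; rewrite mulr0 oppr0.
Qed.

Lemma dot_nab mu e e' : src e' = src e -> dot mu (beta e) = 0 ->
  dot mu (beta (nab e e')) = dot mu (beta e').
Proof.
case: Htg => _ _ H se z0; have [d ->] := H e e' se.
by rewrite dotDr dotZr z0 mulr0 addr0.
Qed.

Section Construct.
Variables (v : V) (e0 : E).
Hypothesis se0 : src e0 = v.

Definition muP (mu : rV) := forall e, src e = v -> dot mu (beta e) = (e == e0)%:R.

Definition mu : rV := epsilon (inhabits 0) muP.

Lemma mu_spec : muP mu.
Proof.
apply: epsilon_spec.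
have [y Hy] := zbasis_exist (fun e : E => (e == e0)%:R) (Hbas v).
by exists y => e se; rewrite dotC; apply: Hy; rewrite inE se.
Qed.

Definition zz (e : E) := dot mu (beta e).

Definition rr : rel V := [rel x y | [exists e, [&& src e == x, tgt e == y & zz e == 0]]].

Definition RR : {set V} := [set w | connect rr v w].

Definition FF : {set V} * {set E} := (RR, [set e | (src e \in RR) && (zz e == 0)]).

Lemma RR_tgt e : src e \in RR -> zz e = 0 -> tgt e \in RR.
Proof.
rewrite !inE => H z0; apply: connect_trans H (connect1 _).
by apply/existsP; exists e; rewrite !eqxx z0 eqxx.
Qed.

Lemma nz_card w : w \in RR -> #|[set e | (src e == w) && (zz e != 0)]| = 1%N.
Proof.
rewrite inE => Hw.
pose P w := #|[set e | (src e == w) && (zz e != 0)]| = 1%N.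
apply: (connect_inv (P := P) Hw).
  rewrite /P; apply/eqP/cards1P; exists e0; apply/setP => e; rewrite !inE.
  apply/andP/eqP => [[/eqP se nz]|->]; last by split; [rewrite se0 | rewrite /zz mu_spec // eqxx oner_neq0].
  by apply/eqP; move: nz; rewrite /zz mu_spec // pnatr_eq0 eqb0 negbK.
move=> a b; rewrite /P => Ha /existsP[e /and3P[/eqP sa /eqP tb /eqP z0]].
have -> : [set e1 | (src e1 == b) && (zz e1 != 0)] =
          [set nab e x | x in [set e1 | (src e1 == a) && (zz e1 != 0)]].
  apply/setP => e''; rewrite !inE; apply/andP/imsetP.
    case=> /eqP se'' nz; exists (nab (erev e) e''); last by rewrite con_inv' // se''.
    have s1 : src e'' = src (erev e) by rewrite src_erev tb.
    rewrite inE con_src // tgt_erev sa eqxx /= /zz dot_nab //; exact: dot_rev.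
  case=> e' /[!inE] /andP[/eqP se' nz] ->.
  split; first by rewrite con_src ?se' // tb.
  by rewrite /zz dot_nab // se'.
rewrite -Ha card_in_imset //.
move=> x y /[!inE] /andP[/eqP sx _] /andP[/eqP sy _] E1.
by rewrite -(con_inv (e := e) (e' := x)) ?sx // E1 con_inv // sy.
Qed.

Lemma FF_face : is_face nab n.-1 FF.
Proof.
apply/and5P; split => /=.
- by apply/set0Pn; exists v; rewrite inE connect0.
- apply/forall_inP; move=> e /[!inE] /andP[sR /eqP z0].
  have sR' : src e \in RR by rewrite inE.
  rewrite sR /=; rewrite src_erev; have := RR_tgt sR' z0; rewrite inE => -> /=; apply/eqP.
  exact: dot_rev.
- apply/forall_inP; move=> w wR; apply/eqP; have wR' := wR; rewrite inE in wR'.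
  have := cardsID [set e | zz e == 0] (Ev w); rewrite card_Ev.
  have -> : Ev w :\: [set e | zz e == 0] = [set e | (src e == w) && (zz e != 0)].
    by apply/setP => e; rewrite !inE andbC.
  rewrite nz_card // => H.
  have -> : [set e in [set e | (src e \in RR) && (zz e == 0)] | src e == w] =
            Ev w :&: [set e | zz e == 0].
    apply/setP => e; rewrite !inE; case: (eqVneq (src e) w) => [->|]; first by rewrite wR' andbT.
    by rewrite andbF.
  lia.
- have rev : forall x y, subadj FF x y -> subadj FF y x.
    move=> x y /existsP[e /[!inE] /andP[/andP[sR /eqP z0] /andP[/eqP sx /eqP ty]]].
    have sR' : src e \in RR by rewrite inE.
    have := RR_tgt sR' z0; rewrite inE => tR.
    apply/existsP; exists (erev e); rewrite !inE src_erev tgt_erev ty sx !eqxx !andbT.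
    by rewrite -ty tR /=; apply/eqP; exact: dot_rev.
  have sym : symmetric (subadj FF) by move=> x y; apply/idP/idP; apply: rev.
  have Hv : forall w, w \in RR -> connect (subadj FF) v w.
    move=> w; rewrite inE => Hw.
    pose P w := connect (subadj FF) v w /\ w \in RR.
    have : P w; last by case.
    apply: (connect_inv (P := P) Hw); first by split; rewrite ?inE connect0.
    move=> a b [ca aR] /existsP[e /and3P[/eqP sa /eqP tb /eqP z0]].
    have bR : b \in RR by rewrite -tb; apply: RR_tgt; rewrite ?sa.
    split=> //; apply: connect_trans ca (connect1 _).
    apply/existsP; exists e; rewrite !inE sa tb !eqxx /= andbT.
    rewrite inE in aR; rewrite aR /=; by apply/eqP.
  apply/forall_inP; move=> u uR; apply/forall_inP; move=> w wR.
  apply: connect_trans (Hv w wR).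
  by rewrite (sym_connect_sym sym); apply: Hv.
- apply/forall_inP; move=> e /[!inE] /andP[sR /eqP z0].
  have sR' : src e \in RR by rewrite inE.
  apply/forall_inP; move=> e' /[!inE] /andP[_ /eqP z0']; apply/implyP => /eqP se'.
  rewrite con_src //; have := RR_tgt sR' z0; rewrite inE => -> /=; apply/eqP.
  by rewrite /zz dot_nab.
Qed.

Lemma FF_facet : is_facet n nab FF.
Proof.
apply/andP; split; last exact: FF_face.
have : e0 \in Ev v by rewrite inE se0.
by move=> H; rewrite -(card_Ev v); apply/card_gt0P; exists e0.
Qed.

Definition FFf : facet := exist _ FF FF_facet.

Lemma FFf_at : v \in (val FFf).1.
Proof. by rewrite /= inE connect0. Qed.

Lemma FFf_miss : miss v FFf = e0.
Proof.
have := facet_edges (e := e0) FFf_at se0.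
rewrite /= inE se0 inE connect0 /= /zz mu_spec // eqxx oner_eq0.
by move/esym/negbFE/eqP.
Qed.

End Construct.

Lemma psi_surj v e : src e = v -> exists2 F : facet, F \in facets_at v & miss v F = e.
Proof. move=> se; exists (FFf se); [exact: FFf_at | exact: FFf_miss]. Qed.


Definition lamP (F : facet) (x : rV) :=
  forall w e, w \in (val F).1 -> src e = w -> dot x (beta e) = (e \notin (val F).2)%:R.

Definition lamOf (F : facet) : rV := epsilon (inhabits 0) (lamP F).

Lemma lamOf_spec F : lamP F (lamOf F).
Proof.
apply: epsilon_spec.
have [v vF] := facet_vertex F.
have HF := facet_face F.
have [x Hx] := zbasis_exist (fun e : E => (e \notin (val F).2)%:R) (Hbas v).
exists x => w e wF se.
pose P w := forall e, src e = w -> dot x (beta e) = (e \notin (val F).2)%:R.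
suff : P w by apply.
apply: (connect_inv (P := P) (face_conn HF vF wF)).
  by move=> e1 se1; rewrite dotC; apply: Hx; rewrite inE se1.
move=> a b Ha /existsP[e1 /andP[e1F /andP[/eqP sa /eqP tb]]] e'' se''.
have s1 : src e'' = src (erev e1) by rewrite src_erev tb.
have se' : src (nab (erev e1) e'') = src e1 by rewrite con_src // tgt_erev.
rewrite -(con_inv' (e := e1) (e'' := e'')); last by rewrite se'' tb.
rewrite dot_nab //; last by rewrite Ha // (negbF e1F).
rewrite Ha ?se' // (face_prop HF e1F se').
by [].
Qed.

Lemma lam_vb : vertex_basis_fun lamOf.
Proof.
move=> v; apply: (zbasis_dual_h (h := miss v) (Hbas v)).
- exact: miss_inj.
- by move=> F vF; have := miss_Ev vF; rewrite !inE.
- by move=> e; rewrite inE => /eqP; apply: psi_surj.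
- move=> e F; rewrite inE in_facets_at => /eqP se vF.
  by rewrite dotC (lamOf_spec vF se) (facet_edges vF se) negbK.
Qed.

End Psi.

Lemma sig_eq (T : Type) (P : T -> Prop) (a b : {x | P x}) : proj1_sig a = proj1_sig b -> a = b.
Proof.
case: a b => [a Ha] [b Hb] /= E; subst b; f_equal; apply: proof_irrelevance.
Qed.

Lemma Psi_Phi lam : vertex_basis_fun lam -> lamOf (betaOf lam) = lam.
Proof.
move=> Hvb; apply: functional_extensionality => F.
have Htg := beta_tgraph Hvb.
have [v vF] := facet_vertex F.
apply/eqP; rewrite -subr_eq0; apply/eqP.
apply: (zbasis_uniq (Hbas Htg v).2) => e; rewrite inE => /eqP se.
rewrite dotBr [dot _ (lamOf _ _)]dotC (lamOf_spec Htg vF se) [dot _ (lam F)]dotC (betaOf_spec Hvb) ?se //.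
by rewrite subrr.
Qed.

Lemma Phi_Psi beta : tgraph_structure nab beta -> betaOf (lamOf beta) = beta.
Proof.
move=> Htg; apply: functional_extensionality => e.
have Hvb := lam_vb Htg.
apply/eqP; rewrite -subr_eq0; apply/eqP.
apply: (zbasis_uniq (Hvb (src e)).2) => F; rewrite in_facets_at => vF.
by rewrite dotBr (betaOf_spec Hvb) // (lamOf_spec Htg vF) // subrr.
Qed.

Lemma main_part1 :
  exists phi : {lam : facet -> rV | vertex_basis_fun lam} ->
               {lam : facet -> rV | characteristic_fun lam}, bijective phi.
Proof.
exists (fun s => exist _ (proj1_sig s) (vb_char (proj2_sig s))).
exists (fun s => exist _ (proj1_sig s) (char_vb (proj2_sig s))).
- by move=> s; apply: sig_eq.
- by move=> s; apply: sig_eq.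
Qed.

Lemma main_part2 :
  exists psi : {lam : facet -> rV | characteristic_fun lam} ->
               {beta : E -> rV | tgraph_structure nab beta}, bijective psi.
Proof.
exists (fun s => exist _ (betaOf (proj1_sig s)) (beta_tgraph (char_vb (proj2_sig s)))).
exists (fun s => exist _ (lamOf (proj1_sig s)) (vb_char (lam_vb (proj2_sig s)))).
- move=> s; apply: sig_eq => /=; apply: Psi_Phi; exact: char_vb (proj2_sig s).
- move=> s; apply: sig_eq => /=; apply: Phi_Psi; exact: proj2_sig s.
Qed.

End Graph.

Theorem proposition6p2 (n : nat) (G : graph) (nab : gE G -> gE G -> gE G) :
  gconnected G -> regular G n -> loopless G -> is_connection nab ->
  (exists phi : {lam : @facet G n nab -> 'rV[int]_n | @vertex_basis_fun G n nab lam} ->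
                {lam : @facet G n nab -> 'rV[int]_n | @characteristic_fun G n nab lam},
     bijective phi) /\
  (exists psi : {lam : @facet G n nab -> 'rV[int]_n | @characteristic_fun G n nab lam} ->
                {beta : gE G -> 'rV[int]_n | @tgraph_structure G n nab beta},
     bijective psi).
Proof.
move=> _ Hreg _ Hcon; split.
- exact: main_part1.
- exact: main_part2.
Qed.
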